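(* Let $\alpha\in\mathbb{R}$, let $\tau,\pi$ be nonzero polynomials, and set $\hat\tau(z)=(1-z^2)^{-\alpha-1/2}\tau(z)$. Suppose $T^{(\alpha+1)}_\pi\hat\tau=\hat\lambda\hat\tau$ for a constant $\hat\lambda$, and set $\lambda=\hat\lambda-2\alpha-1$. Then $T^{(\alpha)}_\tau\pi=\lambda\pi$ and $$B^{(\alpha)}_{\pi\tau}A_{\tau\pi}=T^{(\alpha)}_\tau-\lambda,\qquad A_{\tau\pi}B^{(\alpha)}_{\pi\tau}=T^{(\alpha+1)}_\pi-\hat\lambda.$$
   Context: For a nonzero function $\tau$ and $\alpha\in\mathbb{R}$, $T^{(\alpha)}_\tau=(1-z^2)\left(D_z^2-2\frac{\tau_z}{\tau}D_z+\frac{\tau_{zz}}{\tau}\right)-(2\alpha+1)zD_z+(2\alpha-1)z\frac{\tau_z}{\tau}$. For functions $\tau,\pi$ define $A_{\tau\pi}=\tau^{-1}(\pi D_z-\pi')$ and $B^{(\alpha)}_{\pi\tau}=(1-z^2)A_{\pi\tau}-(2\alpha+1)z\,\tau\,\pi^{-1}$, where $A_{\pi\tau}=\pi^{-1}(\tau D_z-\tau')$. *)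

(* Defs.v *)
From HB Require Import structures.
From mathcomp Require Import all_boot all_order all_algebra.
From mathcomp Require Import all_classical all_reals all_analysis.
Set Implicit Arguments. Unset Strict Implicit. Unset Printing Implicit Defensive.
Import Order.TTheory GRing.Theory Num.Theory.
Import numFieldNormedType.Exports.
Local Open Scope ring_scope.

Section Ops.
Variable R : realType.

Definition D2 (f : R -> R) : R -> R := derive1 (derive1 f).

Definition Top (a : R) (tau : R -> R) (f : R -> R) : R -> R :=
  fun z => (1 - z ^+ 2) * (D2 f z - 2 * (derive1 tau z / tau z) * derive1 f z
                           + (D2 tau z / tau z) * f z)
           - (2 * a + 1) * z * derive1 f z
           + (2 * a - 1) * z * (derive1 tau z / tau z) * f z.

Definition Aop (tau pi : R -> R) (f : R -> R) : R -> R :=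
  fun z => (pi z * derive1 f z - derive1 pi z * f z) / tau z.

Definition Bop (a : R) (pi tau : R -> R) (f : R -> R) : R -> R :=
  fun z => (1 - z ^+ 2) * Aop pi tau f z - (2 * a + 1) * z * (tau z / pi z) * f z.

Definition pfun (p : {poly R}) : R -> R := fun x => p.[x].

Definition hat (a : R) (tau : {poly R}) : R -> R :=
  fun z => powR (1 - z ^+ 2) (- a - 2^-1) * tau.[z].

End Ops.

(* Main.v *)
Require Import Defs.
From HB Require Import structures.
From mathcomp Require Import all_boot all_order all_algebra.
From mathcomp Require Import all_classical all_reals all_analysis.
From mathcomp Require Import ring lra.
Import Order.TTheory GRing.Theory Num.Theory.
Import numFieldNormedType.Exports.
Local Open Scope ring_scope.
Set Implicit Arguments. Unset Strict Implicit.
Section H.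
Variable R : realType.
Implicit Types (f g : R -> R) (x : R).

Lemma dval f x d : is_derive x 1 f d -> derive1 f x = d.
Proof. by move=> h; rewrite derive1E; exact: derive_val. Qed.

Lemma dself f x : derivable f x 1 -> is_derive x 1 f (derive1 f x).
Proof. by move=> h; rewrite derive1E; exact: derivableP. Qed.

Lemma dcst (c : R) x : is_derive x 1 (fun _ : R => c) 0.
Proof. exact: is_derive_cst. Qed.

Lemma did x : is_derive x 1 (fun y : R => y) 1.
Proof. exact: is_derive_id. Qed.

Lemma dD f g x df dg : is_derive x 1 f df -> is_derive x 1 g dg ->
  is_derive x 1 (fun y => f y + g y) (df + dg).
Proof. move=> h1 h2; exact: is_deriveD. Qed.

Lemma dB f g x df dg : is_derive x 1 f df -> is_derive x 1 g dg ->
  is_derive x 1 (fun y => f y - g y) (df - dg).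
Proof. move=> h1 h2; exact: is_deriveB. Qed.

Lemma dM f g x df dg : is_derive x 1 f df -> is_derive x 1 g dg ->
  is_derive x 1 (fun y => f y * g y) (df * g x + f x * dg).
Proof.
move=> h1 h2; have -> : (fun y => f y * g y) = f * g by apply/funext.
have H := is_deriveM h1 h2; apply: is_derive_eq H _.
by rewrite /GRing.scale /= addrC mulrC.
Qed.

Lemma dV g x dg : g x != 0 -> is_derive x 1 g dg ->
  is_derive x 1 (fun y => (g y)^-1) (- dg / (g x) ^+ 2).
Proof.
move=> h1 h2; have H := is_deriveV h1 h2; apply: is_derive_eq H _.
by rewrite /GRing.scale /= mulrC mulNr mulrN.
Qed.

Lemma dpoly (p : {poly R}) x : is_derive x 1 (fun y => p.[y]) p^`().[x].
Proof. exact: is_derive_poly. Qed.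

Lemma dpf (p : {poly R}) : derive1 (pfun p) = pfun p^`().
Proof. by apply/funext => x; apply: dval; exact: dpoly. Qed.

Lemma dsq x : is_derive x 1 (fun y : R => y ^+ 2) (2 * x).
Proof.
have H := dM (did x) (did x); apply: is_derive_eq H _.
by rewrite mul1r mulr1 mulr2n mulrDl mul1r.
Qed.

Lemma dw (e x : R) : 0 < 1 - x^+2 ->
  is_derive x 1 (fun y => powR (1 - y^+2) e)
    (powR (1 - x^+2) e * ((-2*e) * x / (1 - x^+2))).
Proof.
move=> ux.
have du : is_derive x 1 (fun y : R => 1 - y^+2) (0 - 2*x) := dB (dcst 1 x) (dsq x).
have H := is_derive1_comp (f := fun t => powR t e) (g := fun y => 1 - y^+2) (is_derive1_powR e ux) du.
apply: is_derive_eq H _.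
rewrite powRB; last by rewrite (gt_eqF ux) implybT.
rewrite powRr1 ?ltW //.
by field; rewrite (gt_eqF ux).
Qed.

Definition hG (e y : R) := (-2*e) * y / (1 - y^+2).
Definition hH1 (e : R) (tau : {poly R}) (y : R) :=
  powR (1 - y^+2) e * (hG e y * tau.[y] + tau^`().[y]).

Lemma hat1 (a x : R) (tau : {poly R}) : 0 < 1 - x^+2 ->
  is_derive x 1 (hat a tau) (hH1 (-a - 2^-1) tau x).
Proof.
move=> ux; rewrite /hat /hH1 /hG.
have H := dM (dw (-a - 2^-1) ux) (dpoly tau x).
apply: is_derive_eq H _.
by field; rewrite (gt_eqF ux).
Qed.

Lemma hat2 (e x : R) (tau : {poly R}) : 0 < 1 - x^+2 ->
  is_derive x 1 (hH1 e tau)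
   (powR (1 - x^+2) e * hG e x * (hG e x * tau.[x] + tau^`().[x])
    + powR (1 - x^+2) e * (((-2*e) / (1 - x^+2) + (-2*e) * x * (2 * x) / (1 - x^+2)^+2) * tau.[x]
        + hG e x * tau^`().[x] + tau^`()^`().[x])).
Proof.
move=> ux; rewrite /hH1 /hG.
have ux0 : (fun y : R => 1 - y^+2) x != 0 by rewrite /= (gt_eqF ux).
have du : is_derive x 1 (fun y : R => 1 - y^+2) (0 - 2*x) := dB (dcst 1 x) (dsq x).
have H := dM (dw e ux) (dD (dM (dM (dM (dcst (-2*e) x) (did x)) (dV (g := fun y => 1 - y^+2) ux0 du)) (dpoly tau x)) (dpoly tau^`() x)).
apply: is_derive_eq H _.
by field; rewrite (gt_eqF ux).
Qed.


Definition Qp (a lhat : R) (tau pi : {poly R}) : {poly R} :=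
  (1 - 'X^2) * (pi^`()^`() * tau - (tau^`() * pi^`()) *+ 2 + tau^`()^`() * pi)
  - (2*a+1)%:P * 'X * pi^`() * tau + (2*a-1)%:P * 'X * tau^`() * pi
  - (lhat - 2*a - 1)%:P * pi * tau.

Lemma QpE a lhat (tau pi : {poly R}) z : (Qp a lhat tau pi).[z] =
  (1 - z * z) *
  ((pi^`())^`().[z] * tau.[z] -
   (tau^`().[z] * pi^`().[z] + tau^`().[z] * pi^`().[z]) +
   (tau^`())^`().[z] * pi.[z]) -
  (2 * a + 1) * z * pi^`().[z] * tau.[z] +
  (2 * a - 1) * z * tau^`().[z] * pi.[z] -
  (lhat - 2 * a - 1) * pi.[z] * tau.[z].
Proof. by rewrite /Qp !(hornerD, hornerN, hornerM, hornerC, hornerX, hornerXn, hornerMn). Qed.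

Lemma hyp_Q a lhat (tau pi : {poly R}) z : -1 < z < 1 -> pi.[z] != 0 ->
  Top (a+1) (pfun pi) (hat a tau) z = lhat * hat a tau z -> (Qp a lhat tau pi).[z] = 0.
Proof.
move=> /andP[z1 z2] pz E.
have ux : 0 < 1 - z^+2 by nra.
have d1 := dval (hat1 a tau ux).
have d2 : D2 (hat a tau) z = derive1 (hH1 (-a - 2^-1) tau) z.
  rewrite /D2 !derive1E; apply: near_eq_derive.
  apply: filterS2 (lt_nbhsr z1) (lt_nbhsl z2) => y h1 h2.
  apply: dval; apply: hat1; nra.
rewrite (dval (hat2 (-a - 2^-1) tau ux)) in d2.
move: E; rewrite /Top d2 d1 /D2 !dpf /pfun /hat /hH1 /hG.
set W := powR (1 - z^+2) (-a - 2^-1) => E.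
have W0 : W != 0 by rewrite gt_eqF // powR_gt0.
move/eqP: E; rewrite -subr_eq0 => /eqP E.
have : W * (Qp a lhat tau pi).[z] / pi.[z] = 0.
  rewrite -E QpE; field.
  by rewrite pz (gt_eqF ux).
by move=> /eqP; rewrite !mulf_eq0 invr_eq0 (negbTE pz) (negbTE W0) /= orbF => /eqP.
Qed.

Lemma vanish (p : {poly R}) : (forall z : R, -1 < z < 1 -> p.[z] = 0) -> p = 0.
Proof.
move=> H; apply/eqP; apply/negPn/negP => p0.
pose rs := [seq ((i.+2)%:R : R)^-1 | i <- iota 0 (size p)].
have : (size rs < size p)%N.
  apply: max_poly_roots => //.
    apply/allP => x /mapP [i _ ->]; rewrite /root; apply/eqP/H.
    have h : (1 : R) < (i.+2)%:R by rewrite ltr1n.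
    have h0 : (0 : R) < (i.+2)%:R by rewrite ltr0n.
    have hi : 0 < (i.+2%:R : R)^-1 by rewrite invr_gt0.
    rewrite (lt_trans _ hi) ?invf_lt1 //=.
  rewrite /rs map_inj_in_uniq ?iota_uniq // => i j _ _ /invr_inj /eqP.
  by rewrite eqr_nat => /eqP [].
by rewrite size_map size_iota ltnn.
Qed.

Lemma Qp0 a lhat (tau pi : {poly R}) : pi != 0 ->
  (forall z, -1 < z < 1 -> pi.[z] != 0 -> (Qp a lhat tau pi).[z] = 0) ->
  Qp a lhat tau pi = 0.
Proof.
move=> pi0 H.
have : Qp a lhat tau pi * pi = 0.
  apply: vanish => z hz; rewrite hornerM.
  have [->|pz] := eqVneq pi.[z] 0; first by rewrite mulr0.
  by rewrite H // mul0r.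
by move/eqP; rewrite mulf_eq0 (negbTE pi0) orbF => /eqP.
Qed.

Lemma solve_l (X l m p t : R) : X - (l - m - 1) * p * t = 0 -> p * t != 0 -> l = X / (p * t) + m + 1.
Proof. by move=> /subr0_eq -> pt; rewrite -[(l - m - 1) * p * t]mulrA mulfK //; ring. Qed.
End H.

Unset Implicit Arguments.
Set Strict Implicit.

Theorem mainTheorem8 (R : realType) (a : R) (tau pi : {poly R}) (lhat : R) :
  tau != 0 -> pi != 0 ->
  (forall z : R, -1 < z < 1 -> pi.[z] != 0 ->
     Top (a + 1) (pfun pi) (hat a tau) z = lhat * hat a tau z) ->
  let lam := lhat - 2 * a - 1 in
  (forall z : R, tau.[z] != 0 ->
     Top a (pfun tau) (pfun pi) z = lam * pi.[z]) /\
  (forall (f : R -> R) (z : R), tau.[z] != 0 -> pi.[z] != 0 ->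
     (\forall x \near z, derivable f x 1) -> derivable (derive1 f) z 1 ->
     Bop a (pfun pi) (pfun tau) (Aop (pfun tau) (pfun pi) f) z
       = Top a (pfun tau) f z - lam * f z /\
     Aop (pfun tau) (pfun pi) (Bop a (pfun pi) (pfun tau) f) z
       = Top (a + 1) (pfun pi) f z - lhat * f z).
Proof.
move=> t0 p0 Hyp lam; rewrite /lam.
have Q0 := Qp0 (a:=a) (lhat:=lhat) (tau:=tau) p0 (fun z hz pz => hyp_Q hz pz (Hyp z hz pz)).
split.
  move=> z tz.
  apply/eqP; rewrite -subr_eq0; apply/eqP.
  have -> : Top a (pfun tau) (pfun pi) z - (lhat - 2 * a - 1) * pi.[z]
     = (Qp a lhat tau pi).[z] / tau.[z].
    rewrite QpE /Top /D2 !dpf /pfun.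
    field; exact: tz.
  by rewrite Q0 horner0 mul0r.
move=> f z tz pz Hn Hd.
have Qz := QpE a lhat tau pi z; rewrite Q0 horner0 in Qz.
have Hl := solve_l (esym Qz) (mulf_neq0 pz tz).
have Hf0 : is_derive z 1 f (derive1 f z) := dself (nbhs_singleton Hn).
have Hf1 := dself Hd.
split.
  have H := dM (dB (dM (dpoly pi z) Hf1) (dM (dpoly pi^`() z) Hf0)) (dV (g := fun y => tau.[y]) tz (dpoly tau z)).
  rewrite /Bop /Aop /Top /D2 !dpf /pfun (dval H) Hl.
  field; by rewrite tz pz.
have H := dB (dM (dB (dcst 1 z) (dsq z)) (dM (dB (dM (dpoly tau z) Hf1) (dM (dpoly tau^`() z) Hf0)) (dV (g := fun y => pi.[y]) pz (dpoly pi z))))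
  (dM (dM (dM (dcst (2*a+1) z) (did z)) (dM (dpoly tau z) (dV (g := fun y => pi.[y]) pz (dpoly pi z)))) Hf0).
rewrite /Bop /Aop /Top /D2 !dpf /pfun (dval H) Hl.
field; by rewrite tz pz.
Qed.
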